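(* Let $\mathcal{I}$ be a Borel ideal on $\omega$ with $\mathrm{fin} \subseteq \mathcal{I}$. If $\mathcal{I}$ is uniformly weakly $P^+$, then $\mathcal{I}$ is uniformly weakly Ramsey.
   Context: $\mathrm{fin}$ is the ideal of finite subsets of $\omega$; $\mathcal{I}^+$ denotes subsets of $\omega$ not in $\mathcal{I}$; $A \subseteq_{\mathcal{I}} B$ means $A \setminus B \in \mathcal{I}$. $\mathcal{I}$ is uniformly weakly $P^+$ if there is a Borel function $\Phi$ such that for every $\subseteq$-decreasing sequence $\langle A_n : n\in\omega\rangle$ of $\mathcal{I}$-positive sets, $\Phi(\langle A_n\rangle) \in \mathcal{I}^+$ and $\Phi(\langle A_n\rangle) \subseteq_{\mathcal{I}} A_n$ for every $n$. For $A\subseteq\omega$, $\mathcal{I}|A = \{I \subseteq A : I\in\mathcal{I}\}$ and $(\mathcal{I}|A)^+$ is the family of subsets of $A$ not in $\mathcal{I}$. A coloring is $c : [\omega]^2 \to 2$; it is subadditive if $c(\{m,n\}) \le c(\{m,k\}) + c(\{n,k\})$ for all $m<n<k$. $H$ is 0-homogeneous for $c$ if $c(\{m,n\})=0$ for all distinct $m,n\in H$; $H$ is nowhere 0-homogeneous if every $B \in (\mathcal{I}|H)^+$ contains distinct $m,n$ with $c(\{m,n\})=1$. $\mathcal{I}$ is uniformly weakly Ramsey if there is a Borel $\Phi : [\omega]^\omega \times 2^{[\omega]^2} \to [\omega]^\omega$ such that for every $A \in \mathcal{I}^+$ and every subadditive coloring $c$, $\Phi(A,c) \in (\mathcal{I}|A)^+$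 and $\Phi(A,c)$ is 0-homogeneous or nowhere 0-homogeneous for $c$. *)

(* Defs.v *)
From mathcomp Require Import all_boot.
Set Implicit Arguments. Unset Strict Implicit. Unset Printing Implicit Defensive.

(* Borel sets of the product space 2^I (I a countable index type in all uses):
   the sigma-algebra generated by the subbasic clopen sets {x | x i = true}. *)
Inductive borel {I : Type} : ((I -> bool) -> Prop) -> Prop :=
  | borel_sub (i : I) : borel (fun x => x i = true)
  | borel_compl (A : (I -> bool) -> Prop) : borel A -> borel (fun x => ~ A x)
  | borel_cunion (F : nat -> (I -> bool) -> Prop) :
      (forall n, borel (F n)) -> borel (fun x => exists n, F n x)
  | borel_ext (A B : (I -> bool) -> Prop) :
      borel A -> (forall x, A x <-> B x) -> borel B.

Definition borel_fun {I J : Type} (f : (I -> bool) -> (J -> bool)) : Prop :=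
  forall j : J, borel (fun x => f x j = true).

Definition subset_nat := nat -> bool.
Definition subsetn (A B : subset_nat) : Prop := forall n, A n -> B n.
Definition setDn (A B : subset_nat) : subset_nat := fun n => A n && ~~ B n.
Definition setUn (A B : subset_nat) : subset_nat := fun n => A n || B n.
Definition fullset : subset_nat := fun _ => true.
Definition finite_set (A : subset_nat) : Prop := exists N, forall n, A n -> n < N.

Definition is_ideal (I : subset_nat -> Prop) : Prop :=
  (forall A B, I B -> subsetn A B -> I A) /\
  (forall A B, I A -> I B -> I (setUn A B)) /\
  ~ I fullset.

Definition borel_ideal (I : subset_nat -> Prop) : Prop :=
  is_ideal I /\ borel I.

Definition contains_fin (I : subset_nat -> Prop) : Prop :=
  forall A, finite_set A -> I A.

Definition positive (I : subset_nat -> Prop) (A : subset_nat) : Prop := ~ I A.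
Definition subsetI (I : subset_nat -> Prop) (A B : subset_nat) : Prop := I (setDn A B).

(* A sequence <A_n> of subsets of omega, coded as a point of 2^(omega x omega) *)
Definition code_seq (A : nat -> subset_nat) : (nat * nat) -> bool :=
  fun p => A p.1 p.2.

Definition uniformly_weakly_Pplus (I : subset_nat -> Prop) : Prop :=
  exists Phi : ((nat * nat) -> bool) -> subset_nat,
    borel_fun Phi /\
    forall A : nat -> subset_nat,
      (forall n, positive I (A n)) ->
      (forall n, subsetn (A n.+1) (A n)) ->
      positive I (Phi (code_seq A)) /\
      forall n, subsetI I (Phi (code_seq A)) (A n).

(* Colorings c : [omega]^2 -> 2 are coded by their values c (m,n) on pairs m < n;
   the colour of {m,n} (m <> n) is cval c m n. Values at pairs with m >= n are
   irrelevant. *)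
Definition coloring := (nat * nat) -> bool.
Definition cval (c : coloring) (m n : nat) : bool := c (minn m n, maxn m n).

Definition subadditive (c : coloring) : Prop :=
  forall m n k, m < n -> n < k -> cval c m n <= cval c m k + cval c n k.

Definition zero_homogeneous (c : coloring) (H : subset_nat) : Prop :=
  forall m n, H m -> H n -> m <> n -> cval c m n = false.

Definition nowhere_zero_homogeneous (I : subset_nat -> Prop) (c : coloring)
    (H : subset_nat) : Prop :=
  forall B, subsetn B H -> positive I B ->
    exists m n, B m /\ B n /\ m <> n /\ cval c m n = true.

(* A pair (A, c) coded as a point of 2^(omega + omega x omega) *)
Definition code_pair (A : subset_nat) (c : coloring) : (nat + nat * nat) -> bool :=
  fun s => match s with inl n => A n | inr p => c p end.

Definition uniformly_weakly_Ramsey (I : subset_nat -> Prop) : Prop :=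
  exists Phi : ((nat + nat * nat) -> bool) -> subset_nat,
    borel_fun Phi /\
    forall (A : subset_nat) (c : coloring),
      positive I A -> subadditive c ->
      (subsetn (Phi (code_pair A c)) A /\ positive I (Phi (code_pair A c))) /\
      (zero_homogeneous c (Phi (code_pair A c)) \/
       nowhere_zero_homogeneous I c (Phi (code_pair A c))).

(* Main.v *)
From Stdlib Require Import Classical ClassicalEpsilon.
Require Import Defs.
From mathcomp Require Import all_boot.
Set Implicit Arguments. Unset Strict Implicit.

Definition dec (P : Prop) : bool := if excluded_middle_informative P then true else false.
Lemma dec_true P : dec P = true <-> P.
Proof. rewrite /dec; case: excluded_middle_informative => //. Qed.
Lemma dec_false P : dec P = false <-> ~ P.
Proof. rewrite /dec; case: excluded_middle_informative => //. Qed.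

Definition Udef (c : coloring) (k z : nat) : bool := (k < z) && ~~ cval c k z.
Definition Dstep (I : subset_nat -> Prop) (c : coloring) (k : nat) (D : subset_nat) : subset_nat :=
  fun m => if D k then (if dec (I (fun z => D z && Udef c k z)) then D m && (m != k)
                        else D m && ((m <= k) || Udef c k m)) else D m.
Fixpoint Dseq I (A : subset_nat) c n : subset_nat :=
  match n with 0 => A | k.+1 => Dstep I c k (Dseq I A c k) end.
Definition Kset I A c : subset_nat := fun m => Dseq I A c m.+1 m.
Definition Psi I (PhiP : (nat * nat -> bool) -> subset_nat) A c : subset_nat :=
  fun m => if dec (I (Kset I A c)) then PhiP (code_seq (Dseq I A c)) m && A m && ~~ Kset I A c m
           else Kset I A c m.
Definition PhiR I PhiP (x : nat + nat * nat -> bool) : subset_nat :=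
  Psi I PhiP (fun n => x (inl n)) (fun p => x (inr p)).

Lemma borel_preimage {J K : Type} (h : (J -> bool) -> (K -> bool)) (S : (K -> bool) -> Prop) :
  borel_fun h -> borel S -> borel (fun x => S (h x)).
Proof.
move=> hh; elim=> [i|A _ IH|F _ IH|A B _ IH E].
- exact: hh i.
- exact: borel_compl.
- exact: (borel_cunion (F := fun n x => F n (h x))).
- apply: borel_ext IH _ => x; exact: E.
Qed.

Lemma borel_union {J : Type} (A B : (J -> bool) -> Prop) :
  borel A -> borel B -> borel (fun x => A x \/ B x).
Proof.
move=> hA hB.
apply: (borel_ext (borel_cunion (F := fun n => if n is 0 then A else B) _)).
- by case.
- move=> x; split.
  + by case=> [[|n]] H; [left|right].
  + by case=> H; [exists 0|exists 1].
Qed.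

Definition borelb {J : Type} (f : (J -> bool) -> bool) := borel (fun x => f x = true).

Lemma borelb_neg {J} (f : (J -> bool) -> bool) : borelb f -> borelb (fun x => ~~ f x).
Proof.
move=> h; apply: (borel_ext (borel_compl h)) => x; case: (f x); split=> //= H; exact: H.
Qed.

Lemma borelb_or {J} (f g : (J -> bool) -> bool) : borelb f -> borelb g -> borelb (fun x => f x || g x).
Proof.
move=> hf hg; apply: (borel_ext (borel_union hf hg)) => x.
split=> [[]H|/orP//]; apply/orP; by [left|right].
Qed.

Lemma borelb_and {J} (f g : (J -> bool) -> bool) : borelb f -> borelb g -> borelb (fun x => f x && g x).
Proof.
move=> hf hg; apply: (borel_ext (borelb_neg (borelb_or (borelb_neg hf) (borelb_neg hg)))) => x.
by case: (f x); case: (g x).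
Qed.

Lemma borelb_const {J} (j0 : J) (b : bool) : borelb (fun _ : J -> bool => b).
Proof.
have h : borelb (fun x : J -> bool => x j0 || ~~ x j0).
  apply: borelb_or; [exact: borel_sub | apply: borelb_neg; exact: borel_sub].
case: b.
- apply: (borel_ext h) => x; by case: (x j0).
- apply: (borel_ext (borelb_neg h)) => x; by case: (x j0).
Qed.

Lemma borelb_if {J} (b f g : (J -> bool) -> bool) : borelb b -> borelb f -> borelb g ->
  borelb (fun x => if b x then f x else g x).
Proof.
move=> hb hf hg.
apply: (borel_ext (borelb_or (borelb_and hb hf) (borelb_and (borelb_neg hb) hg))) => x.
by case: (b x); case: (f x); case: (g x).
Qed.

Lemma borelb_dec {J} (S : (J -> bool) -> Prop) : borel S -> borelb (fun x => dec (S x)).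
Proof.
move=> h; apply: (borel_ext h) => x; by rewrite dec_true.
Qed.

Section BorelPhi.
Variable I : subset_nat -> Prop.
Hypothesis bI : borel I.
Variable PhiP : (nat * nat -> bool) -> subset_nat.
Hypothesis bPhiP : borel_fun PhiP.

Local Notation J := (nat + nat * nat)%type.
Local Notation Ax := (fun (x : J -> bool) n => x (inl n)).
Local Notation cx := (fun (x : J -> bool) p => x (inr p)).

Lemma bD n m : borelb (fun x : J -> bool => Dseq I (Ax x) (cx x) n m).
Proof.
elim: n m => [|k IH] m; first exact: borel_sub (inl m).
rewrite /borelb /=; rewrite /Dstep.
have hU : forall a b, borelb (fun x : J -> bool => Udef (cx x) a b).
  move=> a b; rewrite /Udef; apply: borelb_and; first exact: (borelb_const (inl 0) (a < b)).
  apply: borelb_neg; exact: borel_sub.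
apply: borelb_if => //; apply: borelb_if.
- apply: borelb_dec; apply: (borel_preimage (h := fun x z => Dseq I (Ax x) (cx x) k z && Udef (cx x) k z)) => //.
  move=> z; exact: borelb_and.
- apply: borelb_and => //; exact: (borelb_const (inl 0) (m != k)).
- apply: borelb_and => //; apply: borelb_or => //; exact: (borelb_const (inl 0) (m <= k)).
Qed.

Lemma bPhiR : borel_fun (PhiR I PhiP).
Proof.
move=> m; rewrite /PhiR /Psi.
have bK : borel_fun (fun x : J -> bool => Kset I (Ax x) (cx x)).
  move=> z; exact: bD.
apply: borelb_if.
- apply: borelb_dec; exact: borel_preimage bK bI.
- apply: borelb_and; last by apply: borelb_neg; exact: bK.
  apply: borelb_and; last exact: borel_sub.
  apply: (borel_preimage (h := fun x : J -> bool => code_seq (Dseq I (Ax x) (cx x)))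
           (S := fun y => PhiP y m = true)); last exact: bPhiP.
  move=> p; exact: bD.
- exact: bK.
Qed.
End BorelPhi.

Section Math.
Variable I : subset_nat -> Prop.
Hypothesis HI : is_ideal I.
Hypothesis Hfin : contains_fin I.
Variable A : subset_nat.
Variable c : coloring.
Hypothesis HA : positive I A.
Hypothesis Hc : subadditive c.

Lemma isub B C : I C -> subsetn B C -> I B.
Proof. case: HI => h _; exact: h. Qed.
Lemma iunion B C : I B -> I C -> I (setUn B C).
Proof. case: HI => _ [h _]; exact: h. Qed.
Lemma iempty (B : subset_nat) : (forall z, B z = false) -> I B.
Proof. move=> h; apply: Hfin; exists 0 => n; by rewrite h. Qed.
Lemma ibounded (B : subset_nat) N : (forall z, B z -> z < N) -> I B.
Proof. move=> h; apply: Hfin; by exists N. Qed.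

Lemma cvalC m n : cval c m n = cval c n m.
Proof. by rewrite /cval minnC maxnC. Qed.

Local Notation D := (Dseq I A c).
Local Notation K := (Kset I A c).

Lemma Dstep_sub k E : subsetn (Dstep I c k E) E.
Proof.
move=> m; rewrite /Dstep; case: (E k) => //; case: (dec _) => //; by case/andP.
Qed.

Lemma D_mono m d : subsetn (D (m + d)) (D m).
Proof.
elim: d => [|d IH]; first by rewrite addn0.
move=> z H; apply: IH; rewrite addnS in H; exact: Dstep_sub H.
Qed.

Lemma D_mono' m n : m <= n -> subsetn (D n) (D m).
Proof. move=> le; rewrite -(subnKC le); exact: D_mono. Qed.

Lemma D_pos n : positive I (D n).
Proof.
elim: n => [|k IH] //=.
set E := D k => HE; apply: IH; rewrite -/E.
case Ek: (E k).
- case Hd: (dec (I (fun z => E z && Udef c k z))).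
  + apply: (isub (C := setUn (Dstep I c k E) (fun z => z == k))).
    * apply: iunion => //; apply: (ibounded (N := k.+1)) => z /eqP -> //.
    * move=> z Ez; rewrite /setUn /Dstep Ek Hd Ez /=; by case: (z == k).
  + have Hn := Hd; move/dec_false: Hn; case; apply: (isub HE) => z /andP [Ez Uz].
    by rewrite /Dstep Ek Hd Ez Uz orbT.
- apply: (isub HE) => z Ez; by rewrite /Dstep Ek.
Qed.

Lemma K_stays m : K m -> forall n, D n m.
Proof.
move=> Km n; case: (leqP n m.+1) => le.
- exact: (D_mono' le).
- rewrite -(subnKC (ltnW le)); elim: (n - m.+1) => [|d IH]; first by rewrite addn0.
  rewrite addnS; change (Dstep I c (m.+1 + d) (D (m.+1 + d)) m); rewrite /Dstep IH.
  have h1 : m != m.+1 + d by rewrite neq_ltn ltnS leq_addr.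
  have h2 : m <= m.+1 + d by rewrite ltnW // ltnS leq_addr.
  rewrite h1 h2 orTb !andbT; by case: ifP => _ //; case: ifP.
Qed.

Lemma K_info x : K x -> D x x /\ dec (I (fun z => D x z && Udef c x z)) = false.
Proof.
rewrite /Kset; change (Dstep I c x (D x) x -> D x x /\ dec (I (fun z => D x z && Udef c x z)) = false).
rewrite /Dstep; case: (D x x) => //; case: (dec _) => //.
by rewrite eqxx.
Qed.

Lemma K_homog : zero_homogeneous c K.
Proof.
have key : forall x y, x < y -> K x -> K y -> cval c x y = false.
  move=> x y lt Kx Ky; have H : Dstep I c x (D x) y := K_stays Ky x.+1.
  case: (K_info Kx) => Dx Hd; move: H; rewrite /Dstep Dx Hd leqNgt lt /= /Udef lt /=.
  by case: (cval c x y); rewrite ?andbF.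
move=> m n Km Kn ne; case: (ltngtP m n) => h.
- exact: key.
- rewrite cvalC; exact: key.
- by case: ne.
Qed.

Lemma K_subA m : K m -> A m.
Proof. move=> Km; exact: (D_mono' (leq0n m.+1) Km). Qed.

Lemma find_drop (f : nat -> bool) n : f 0 -> ~~ f n -> exists k, k < n /\ f k /\ ~~ f k.+1.
Proof.
move=> f0; elim: n => [|n IH]; first by rewrite f0.
move=> fn; case fnn: (f n).
- exists n; by rewrite fnn fn.
- case: IH => [|k [lt [fk fk1]]]; first by rewrite fnn.
  exists k; split => //; exact: ltnW.
Qed.

Lemma notK_small y : A y -> ~~ K y -> exists n, I (fun z => D n z && Udef c y z).
Proof.
move=> Ay nKy; case Dy: (D y y).
- exists y; move: nKy; rewrite /Kset /= /Dstep Dy.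
  case Hd: (dec _); first by move=> _; apply/dec_true.
  by rewrite leqnn.
- case: (find_drop (f := fun k => D k y) (n := y)) => [|| k [lt [Dk Dk1]]].
  + exact: Ay.
  + by rewrite Dy.
  move: Dk1; rewrite /= /Dstep Dk.
  case Dkk: (D k k) => //.
  case Hd: (dec _); first by rewrite andTb neq_ltn lt orbT.
  rewrite andTb negb_or => /andP [_ nU].
  have cky : cval c k y = true by move: nU; rewrite /Udef lt /=; case: (cval c k y).
  exists k.+1; apply: iempty => z; rewrite /= /Dstep Dkk Hd.
  apply/negP => /andP [/andP [_ H1] /andP [yz cyz]].
  have kz : k < z by exact: ltn_trans lt yz.
  move: H1; rewrite leqNgt kz /= /Udef kz /= => ckz.
  have := Hc lt yz; rewrite cky (negbTE ckz) (negbTE cyz) //.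
Qed.

End Math.

Theorem lemma5p2 (I : subset_nat -> Prop) :
  borel_ideal I -> contains_fin I ->
  uniformly_weakly_Pplus I -> uniformly_weakly_Ramsey I.
Proof.
move=> [HI bI] Hfin [PhiP [bPhiP HP]].
exists (PhiR I PhiP); split; first exact: bPhiR.
move=> A c HA Hc.
change (PhiR I PhiP (code_pair A c)) with (Psi I PhiP A c).
set D := Dseq I A c; set K := Kset I A c; set P := PhiP (code_seq D).
have [Ppos PsubD] : positive I P /\ (forall n, Defs.subsetI I P (D n)).
  apply: HP; first by move=> n; exact: (@D_pos I HI Hfin A c HA n).
  move=> n; exact: Dstep_sub.
rewrite /Psi -/D -/K -/P.
case Hd: (dec (I K)).
- have IK : I K by apply/dec_true.
  split; [split|right].
  + by move=> m /andP [/andP [_ ->]].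
  + move=> IQ; apply: Ppos.
    apply: (isub HI (C := setUn (setDn P (D 0)) (setUn K (fun m => P m && A m && ~~ K m)))).
    * apply: (iunion HI); first exact: PsubD.
      exact: (iunion HI).
    * move=> m Pm; rewrite /setUn /setDn /D /= Pm.
      by case: (A m); case: (K m).
  + move=> B BQ BP; apply: NNPP => Hno.
    have Bzero : forall m n, B m -> B n -> m <> n -> cval c m n = false.
      move=> m n Bm Bn ne; apply/negbTE/negP => cmn; apply: Hno; by exists m, n.
    have [y By] : exists y, B y.
      apply: NNPP => Hne; apply: BP; apply: (iempty Hfin) => z.
      by apply/negP => Bz; apply: Hne; exists z.
    have := BQ y By; case/andP => /andP [Py Ay] nKy.
    case: (notK_small Hfin Hc Ay nKy) => n HIn.
    apply: BP; apply: (isub HI (C := setUn (fun z => z < y.+1)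
                          (setUn (fun z => D n z && Udef c y z) (setDn P (D n))))).
    * apply: (iunion HI); first exact: (ibounded Hfin (N := y.+1)).
      apply: (iunion HI) => //; exact: PsubD.
    * move=> z Bz; rewrite /setUn /setDn.
      rewrite ltnS; case: (leqP z y) => [zy|yz] /=; first by [].
      have Uyz : Udef c y z.
        rewrite /Udef yz /= Bzero //; move=> e; move: yz; by rewrite e ltnn.
      have := BQ z Bz; case/andP => /andP [Pz _] _.
      by rewrite Uyz Pz andbT; case: (D n z).
- have nIK : ~ I K by apply/dec_false.
  split; [split|left].
  + move=> m; exact: K_subA.
  + move=> IP; apply: nIK; apply: (isub HI IP) => m //.
  + move=> m n Km Kn ne; exact: K_homog Km Kn ne.
Qed.
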